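(* Let $0\le v\le 1$, $r\neq 0$ and $a,b>0$, and let $\mu:=\min\{1-v,v\}$. If either (i) $r>0$ and $0<a\le b$, or (ii) $r<0$ and $a\ge b>0$, then $$G_v(a,b)\le \left\{1+\frac{\mu^2}{2}\left(\ln_r\frac{a}{b}\right)^2\right\}G_v(a,b)\le A_v(a,b).$$
   Context: For $a,b>0$ and $0\le v\le 1$: $A_v(a,b):=(1-v)a+vb$ and $G_v(a,b):=a^{1-v}b^v$. For $x>0$ and $r\neq 0$, the $r$-logarithm is $\ln_r x:=\frac{x^r-1}{r}$. *)

(* Defs.v *)
From Stdlib Require Import Reals.
Open Scope R_scope.

Definition A_v (v a b : R) : R := (1 - v) * a + v * b.

Definition G_v (v a b : R) : R := Rpower a (1 - v) * Rpower b v.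

Definition ln_r (r x : R) : R := (Rpower x r - 1) / r.

(* Main.v *)
Require Import Defs.
From Stdlib Require Import Reals Lra.
From Coquelicot Require Import Coquelicot.
Open Scope R_scope.

Lemma amgm (w p q : R) : 0 <= w <= 1 ->
  exp ((1 - w) * p + w * q) <= (1 - w) * exp p + w * exp q.
Proof.
  intros Hw. set (m := (1 - w) * p + w * q).
  assert (Ep : exp p = exp m * exp (p - m)) by (rewrite <- exp_plus; f_equal; ring).
  assert (Eq : exp q = exp m * exp (q - m)) by (rewrite <- exp_plus; f_equal; ring).
  pose proof (exp_ineq1_le (p - m)). pose proof (exp_ineq1_le (q - m)).
  pose proof (exp_pos m).
  rewrite Ep, Eq.
  assert (exp m * ((1 - w) * (1 + (p - m)) + w * (1 + (q - m))) <=
          exp m * ((1 - w) * exp (p - m) + w * exp (q - m))).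
  { apply Rmult_le_compat_l; [lra|]. nra. }
  replace ((1 - w) * (1 + (p - m)) + w * (1 + (q - m))) with 1 in H2 by (unfold m; ring).
  lra.
Qed.

Lemma conv0 (g1 g2 g3 : R -> R) :
  (forall t, derivable_pt_lim g1 t (g2 t)) ->
  (forall t, derivable_pt_lim g2 t (g3 t)) ->
  (forall t, 0 <= g3 t) -> g1 0 = 0 -> g2 0 = 0 -> forall t, 0 <= g1 t.
Proof.
  intros D1 D2 P3 Z1 Z2 t.
  destruct (Rtotal_order t 0) as [Ht|[Ht|Ht]].
  - destruct (MVT_cor2 g1 g2 t 0 Ht (fun c _ => D1 c)) as [c [Hc1 Hc2]].
    destruct (MVT_cor2 g2 g3 c 0 (proj2 Hc2) (fun d _ => D2 d)) as [d [Hd1 Hd2]].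
    pose proof (P3 d).
    assert (g2 c <= 0) by (rewrite Z2 in Hd1; nra).
    rewrite Z1 in Hc1. nra.
  - subst; lra.
  - destruct (MVT_cor2 g1 g2 0 t Ht (fun c _ => D1 c)) as [c [Hc1 Hc2]].
    destruct (MVT_cor2 g2 g3 0 c (proj1 Hc2) (fun d _ => D2 d)) as [d [Hd1 Hd2]].
    pose proof (P3 d).
    assert (0 <= g2 c) by (rewrite Z2 in Hd1; nra).
    rewrite Z1 in Hc1. nra.
Qed.

Lemma hbound (v t : R) : 0 <= v <= 1 ->
  Rmin (1 - v) v ^ 2 <= v * (1 - v) * (v * exp (v * t) + (1 - v) * exp (- (1 - v) * t)).
Proof.
  intros Hv.
  destruct (Req_dec v 0) as [->|H0].
  { rewrite Rmin_right by lra. lra. }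
  destruct (Req_dec v 1) as [->|H1].
  { rewrite Rmin_left by lra. lra. }
  assert (Hv' : 0 < v < 1) by lra.
  set (al := v / (1 - v)).
  assert (Hal : 0 < al) by (unfold al; apply Rdiv_lt_0_compat; lra).
  set (L := ln al).
  pose proof (amgm v (L + v * t) (- L - (1 - v) * t) (conj (proj1 Hv) (proj2 Hv))) as A.
  assert (E1 : exp (L + v * t) = al * exp (v * t)) by (rewrite exp_plus; unfold L; rewrite exp_ln; auto).
  assert (E2 : exp (- L - (1 - v) * t) = / al * exp (- (1 - v) * t)).
  { replace (- L - (1 - v) * t) with (- L + - (1 - v) * t) by ring.
    rewrite exp_plus, exp_Ropp; unfold L; rewrite exp_ln; auto. }
  rewrite E1, E2 in A.
  replace ((1 - v) * (L + v * t) + v * (- L - (1 - v) * t)) with ((1 - 2 * v) * L) in A by ring.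
  assert (Ehal : (1 - v) * (al * exp (v * t)) + v * (/ al * exp (- (1 - v) * t))
                 = v * exp (v * t) + (1 - v) * exp (- (1 - v) * t)).
  { unfold al. field. lra. }
  rewrite Ehal in A.
  assert (Hvv : 0 < v * (1 - v)) by nra.
  destruct (Rle_dec v (1/2)) as [Hle|Hgt].
  - rewrite Rmin_right by lra.
    assert (L <= 0).
    { unfold L. rewrite <- ln_1. apply ln_le; auto. unfold al.
      apply (Rmult_le_reg_r (1 - v)); [lra|]. field_simplify; lra. }
    assert (exp L <= exp ((1 - 2 * v) * L)) by (apply exp_le_3 || (apply Rlt_le ; apply exp_increasing; nra) || (destruct (Req_dec L 0) ; [ subst; rewrite H2; right; f_equal; ring | left; apply exp_increasing; nra])).
    unfold L in H2; rewrite exp_ln in H2 by auto.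
    assert (v * (1 - v) * al = v ^ 2) by (unfold al; field; lra).
    rewrite <- H3. apply Rmult_le_compat_l; [lra|]. fold L in H2. lra.
  - rewrite Rmin_left by lra.
    assert (0 <= L).
    { unfold L. rewrite <- ln_1. apply ln_le; [lra|]. unfold al.
      apply (Rmult_le_reg_r (1 - v)); [lra|]. field_simplify; lra. }
    assert (exp (- L) <= exp ((1 - 2 * v) * L)).
    { destruct (Req_dec L 0) as [HL|HL]; [rewrite HL; right; f_equal; ring|].
      left; apply exp_increasing; nra. }
    rewrite exp_Ropp in H2. unfold L in H2; rewrite exp_ln in H2 by auto.
    assert (v * (1 - v) * / al = (1 - v) ^ 2) by (unfold al; field; lra).
    rewrite <- H3. apply Rmult_le_compat_l; [lra|]. fold L in H2. lra.
Qed.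

Lemma fbound (v t : R) : 0 <= v <= 1 ->
  1 + Rmin (1 - v) v ^ 2 / 2 * t ^ 2 <= (1 - v) * exp (v * t) + v * exp (- (1 - v) * t).
Proof.
  intros Hv. set (k := Rmin (1 - v) v ^ 2).
  set (g1 := fun t => (1 - v) * exp (v * t) + v * exp (- (1 - v) * t) - 1 - k / 2 * t ^ 2).
  set (g2 := fun t => v * (1 - v) * (exp (v * t) - exp (- (1 - v) * t)) - k * t).
  set (g3 := fun t => v * (1 - v) * (v * exp (v * t) + (1 - v) * exp (- (1 - v) * t)) - k).
  assert (0 <= g1 t).
  { apply (conv0 g1 g2 g3).
    - intro x. apply is_derive_Reals. unfold g1, g2. auto_derive; auto. field.
    - intro x. apply is_derive_Reals. unfold g2, g3. auto_derive; auto. ring.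
    - intro x. unfold g3, k. pose proof (hbound v x Hv). lra.
    - unfold g1. rewrite !Rmult_0_r, exp_0. ring.
    - unfold g2. rewrite !Rmult_0_r, exp_0. ring. }
  unfold g1 in H. lra.
Qed.

Lemma lnr_sq (r x : R) : 0 < x -> ((0 < r /\ x <= 1) \/ (r < 0 /\ 1 <= x)) ->
  ln_r r x ^ 2 <= ln x ^ 2.
Proof.
  intros Hx H. unfold ln_r, Rpower.
  set (s := ln x).
  pose proof (exp_ineq1_le (r * s)).
  destruct H as [[Hr H1]|[Hr H1]].
  - assert (s <= 0) by (unfold s; rewrite <- ln_1; apply ln_le; lra).
    assert (exp (r * s) <= 1) by (rewrite <- exp_0; apply exp_le_3 || (destruct (Req_dec (r*s) 0) as [E|E]; [rewrite E; lra| left; apply exp_increasing; nra])).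
    assert (s <= (exp (r * s) - 1) / r <= 0).
    { set (q := (exp (r * s) - 1) / r).
      assert (Eq : q * r = exp (r * s) - 1) by (unfold q; field; lra).
      split; nra. }
    nra.
  - assert (0 <= s) by (unfold s; rewrite <- ln_1; apply ln_le; lra).
    assert (exp (r * s) <= 1) by (rewrite <- exp_0; (destruct (Req_dec (r*s) 0) as [E|E]; [rewrite E; lra| left; apply exp_increasing; nra])).
    assert (0 <= (exp (r * s) - 1) / r <= s).
    { set (q := (exp (r * s) - 1) / r).
      assert (Eq : q * r = exp (r * s) - 1) by (unfold q; field; lra).
      split; nra. }
    nra.
Qed.

Theorem corollary2p3 (v r a b : R) :
  0 <= v <= 1 -> r <> 0 -> 0 < a -> 0 < b ->
  ((0 < r /\ a <= b) \/ (r < 0 /\ b <= a)) ->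
  let mu := Rmin (1 - v) v in
  G_v v a b <= (1 + mu ^ 2 / 2 * (ln_r r (a / b)) ^ 2) * G_v v a b /\
  (1 + mu ^ 2 / 2 * (ln_r r (a / b)) ^ 2) * G_v v a b <= A_v v a b.
Proof.
  intros Hv Hr Ha Hb Hc mu.
  assert (HG : 0 < G_v v a b) by (unfold G_v, Rpower; apply Rmult_lt_0_compat; apply exp_pos).
  set (L := ln_r r (a / b)).
  split.
  - assert (0 <= mu ^ 2 / 2 * L ^ 2).
    { apply Rmult_le_pos; [apply Rmult_le_pos; [apply pow2_ge_0|lra]|apply pow2_ge_0]. }
    nra.
  - set (t := ln a - ln b).
    assert (EA : A_v v a b = G_v v a b * ((1 - v) * exp (v * t) + v * exp (- (1 - v) * t))).
    { unfold A_v, G_v, Rpower, t. rewrite <- exp_plus.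
      set (m := (1 - v) * ln a + v * ln b).
      assert (E1 : exp m * exp (v * (ln a - ln b)) = a)
        by (rewrite <- exp_plus; unfold m; replace ((1 - v) * ln a + v * ln b + v * (ln a - ln b)) with (ln a) by ring; apply exp_ln; auto).
      assert (E2 : exp m * exp (- (1 - v) * (ln a - ln b)) = b)
        by (rewrite <- exp_plus; unfold m; replace ((1 - v) * ln a + v * ln b + - (1 - v) * (ln a - ln b)) with (ln b) by ring; apply exp_ln; auto).
      transitivity ((1 - v) * (exp m * exp (v * (ln a - ln b))) + v * (exp m * exp (- (1 - v) * (ln a - ln b)))).
      + rewrite E1, E2. reflexivity.
      + ring. }
    assert (Hab : 0 < a / b) by (apply Rdiv_lt_0_compat; auto).
    assert (HL : L ^ 2 <= t ^ 2).
    { unfold L, t. rewrite <- ln_div by auto. apply lnr_sq; auto.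
      destruct Hc as [[H1 H2]|[H1 H2]]; [left|right]; split; auto.
      - apply (Rmult_le_reg_r b); auto. field_simplify; lra.
      - apply (Rmult_le_reg_r b); auto. field_simplify; lra. }
    pose proof (fbound v t Hv).
    rewrite EA. rewrite (Rmult_comm (G_v v a b)).
    apply Rmult_le_compat_r; [lra|].
    fold mu in H.
    assert (mu ^ 2 / 2 * L ^ 2 <= mu ^ 2 / 2 * t ^ 2).
    { apply Rmult_le_compat_l; [|auto]. apply Rmult_le_pos; [apply pow2_ge_0|lra]. }
    lra.
Qed.
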